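(* In the setting of the context: (i) If $\omega\notin i\mathbb{R}$ and $|\omega_\Im|$ is large enough, then $\omega\notin W_\Omega(T)$. (ii) For sequences $\{\omega^n\}\subset W_\Omega(T)$ with $|\omega^n_\Re|\to\infty$ as $n\to\infty$, it holds that $\hat\beta(\omega^n)\sim-2\omega^n_\Im(\omega^n_\Re)^2/d$ and $\omega^n_\Im=O((\omega^n_\Re)^{-2})$. (iii) If $\omega\notin i\mathbb{R}\cup\partial\mathcal{D}$, then $\hat\beta(\omega)\ge0$ if and only if $\omega\in\Pi_\beta$. (iv) If $\omega\notin i\mathbb{R}\cup\partial\mathcal{D}$, then $\hat\alpha(\omega)\ge0$ if and only if $\omega\in\Pi_\alpha$.
   Context: Let $\mathcal{H}$ be a Hilbert space, $A$ a selfadjoint (possibly unbounded) operator in $\mathcal{H}$ and $B$ a nonzero bounded selfadjoint operator. Let $c\ge0$, $d>0$, $\delta_\pm:=\pm\sqrt{c-d^2/4}-id/2$ (principal square root). $W(A),W(B)\subset\mathbb{R}$ are the numerical ranges. For real $\alpha,\beta$ let $p_{(\alpha,\beta)}(\omega):=(\alpha-\omega^2)(c-id\omega-\omega^2)-\beta\omega^2$ with roots $r_1,\dots,r_4$ labelled continuously in $(\alpha,\beta)$ and extended by limits to $\overline{\mathbb{R}}\times\mathbb{R}$ ($\overline{\mathbb{R}}=\mathbb{R}\cup\{\pm\infty\}$), values in $\overline{\mathbb{C}}$. Let $\Omega:=\overline{W(A)}\times\overline{W(B)}$ (closure of $W(A)$ in $\overline{\mathbb{R}}$) and $W_\Omega(T):=\bigcup_{n=1}^4\bigcup_{(\alpha,\beta)\in\Omega}r_n(\alpha,\beta)$.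 Let $\mathcal{D}:=\{\omega:|\omega+ic/d|<c/d\}$. Write $\omega=\omega_\Re+i\omega_\Im$ and define $\hat\beta(\omega):=\frac{-2\omega_\Im\left((-\omega_\Re^2+\omega_\Im^2+d\omega_\Im+c)^2+\omega_\Re^2(2\omega_\Im+d)^2\right)}{d|\omega|^2+2c\omega_\Im}$, $\hat\alpha(\omega):=\frac{(2\omega_\Im+d)|\omega|^4}{d|\omega|^2+2c\omega_\Im}$ (defined for $\omega\notin\partial\mathcal{D}$). Let $\Pi_\beta:=\{\omega\in\mathbb{C}\setminus\overline{\mathcal{D}}:\omega_\Im\le0\}$ and $\Pi_\alpha:=\{\omega\in\mathbb{C}\setminus\overline{\mathcal{D}}:\omega_\Im\ge-d/2\}\cup\{\omega\in\mathcal{D}:\omega_\Im\le-d/2\}$. *)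

(* Defs.v *)
From HB Require Import structures.
From mathcomp Require Import all_boot all_order all_algebra.
From mathcomp Require Import complex.
From mathcomp Require Import all_classical all_reals.
From mathcomp Require Import ereal topology normedtype sequences landau.
Set Implicit Arguments. Unset Strict Implicit. Unset Printing Implicit Defensive.
Import Order.TTheory GRing.Theory Num.Theory.
Import numFieldNormedType.Exports.
Local Open Scope classical_set_scope.
Local Open Scope ring_scope.

Definition is_inner_product (R : realType) (H : lmodType R[i])
  (ip : H -> H -> R[i]) : Prop :=
  [/\ (forall (a : R[i]) (x y z : H), ip (a *: x + y) z = a * ip x z + ip y z),
      (forall x y : H, ip y x = conjc (ip x y)),
      (forall x : H, 0 <= complex.Re (ip x x)) &
      (forall x : H, ip x x = 0 -> x = 0)].

Definition hnorm (R : realType) (H : lmodType R[i]) (ip : H -> H -> R[i])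
  (x : H) : R := Num.sqrt (complex.Re (ip x x)).

Definition is_complete (R : realType) (H : lmodType R[i])
  (ip : H -> H -> R[i]) : Prop :=
  forall u : nat -> H,
    (forall e : R, 0 < e -> exists N : nat, forall m n : nat,
        (N <= m)%N -> (N <= n)%N -> hnorm ip (u m - u n) < e) ->
    exists l : H, forall e : R, 0 < e -> exists N : nat, forall n : nat,
        (N <= n)%N -> hnorm ip (u n - l) < e.

Definition is_hilbert (R : realType) (H : lmodType R[i])
  (ip : H -> H -> R[i]) : Prop := is_inner_product ip /\ is_complete ip.

(* A (possibly unbounded) selfadjoint operator with domain D:
   D is a dense linear subspace, A is linear on D, and the graph of the
   adjoint A^* equals the graph of A, i.e.
   (y \in dom A^* and A^* y = z)  <->  (y \in D and A y = z). *)
Definition unbounded_selfadjoint (R : realType) (H : lmodType R[i])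
  (ip : H -> H -> R[i]) (D : set H) (A : H -> H) : Prop :=
  [/\ D 0,
      (forall (a : R[i]) (x y : H), D x -> D y -> D (a *: x + y)),
      (forall (a : R[i]) (x y : H), D x -> D y -> A (a *: x + y) = a *: A x + A y),
      (forall (x : H) (e : R), 0 < e -> exists2 y, D y & hnorm ip (x - y) < e) &
      (forall y z : H, (forall x : H, D x -> ip (A x) y = ip x z) <-> (D y /\ z = A y))].

Definition bounded_selfadjoint (R : realType) (H : lmodType R[i])
  (ip : H -> H -> R[i]) (B : H -> H) : Prop :=
  [/\ (forall (a : R[i]) (x y : H), B (a *: x + y) = a *: B x + B y),
      (exists M : R, forall x : H, hnorm ip (B x) <= M * hnorm ip x) &
      (forall x y : H, ip (B x) y = ip x (B y))].

(* Numerical range W(A) = { <Ax,x> : x \in dom A, ||x|| = 1 }, which is a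
   subset of the reals for a symmetric operator; we record it as a set of
   reals r with <Ax,x> = r (as a complex number). *)
Definition numrange (R : realType) (H : lmodType R[i])
  (ip : H -> H -> R[i]) (D : set H) (A : H -> H) : set R :=
  [set r : R | exists x : H, [/\ D x, ip x x = 1 & ip (A x) x = (r%:C)%C]].

Definition cmod (R : realType) (w : R[i]) : R :=
  Num.sqrt (complex.Re w ^+ 2 + complex.Im w ^+ 2).

Definition pquart (R : realType) (c d a b : R) (w : R[i]) : R[i] :=
  ((a%:C)%C - w ^+ 2) * ((c%:C)%C - ((d%:C)%C * 'i%C) * w - w ^+ 2)
  - (b%:C)%C * w ^+ 2.

(* w is a root r_n(a,b) of p_(a,b) for some n, where for a = +-oo the
   roots are extended by limits: w is then a limit of roots of
   p_(a_k,b_k) along real (a_k, b_k) -> (a, b). *)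
Definition ext_root (R : realType) (c d : R) (a : \bar R) (b : R) (w : R[i])
  : Prop :=
  match a with
  | EFin a0 => pquart c d a0 b w = 0
  | _ => exists (ak bk : nat -> R) (wk : nat -> R[i]),
      [/\ (fun k => (ak k)%:E) @ \oo --> a,
          bk @ \oo --> b,
          (forall e : R, 0 < e -> exists N : nat, forall k : nat,
              (N <= k)%N -> cmod (wk k - w) < e) &
          (forall k : nat, pquart c d (ak k) (bk k) (wk k) = 0)]
  end.

(* Omega = closure of W(A) in the extended reals  x  closure of W(B) in R;
   W_Omega(T) = union of all r_n(a,b), (a,b) in Omega (finite values). *)
Definition WOmega (R : realType) (c d : R) (WA WB : set R) : set R[i] :=
  [set w : R[i] | exists (a : \bar R) (b : R),
      [/\ closure (EFin @` WA) a, closure WB b & ext_root c d a b w]].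

Definition diskD (R : realType) (c d : R) (w : R[i]) : Prop :=
  cmod (w + Complex 0 (c / d)) < c / d.
Definition cldiskD (R : realType) (c d : R) (w : R[i]) : Prop :=
  cmod (w + Complex 0 (c / d)) <= c / d.
Definition bdD (R : realType) (c d : R) (w : R[i]) : Prop :=
  cmod (w + Complex 0 (c / d)) = c / d.

Definition betahat (R : realType) (c d : R) (w : R[i]) : R :=
  let x := complex.Re w in let y := complex.Im w in
  (- 2 * y * ((- x ^+ 2 + y ^+ 2 + d * y + c) ^+ 2 + x ^+ 2 * (2 * y + d) ^+ 2))
  / (d * (x ^+ 2 + y ^+ 2) + 2 * c * y).

Definition alphahat (R : realType) (c d : R) (w : R[i]) : R :=
  let x := complex.Re w in let y := complex.Im w in
  ((2 * y + d) * (x ^+ 2 + y ^+ 2) ^+ 2) / (d * (x ^+ 2 + y ^+ 2) + 2 * c * y).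

Definition Pi_beta (R : realType) (c d : R) (w : R[i]) : Prop :=
  ~ cldiskD c d w /\ complex.Im w <= 0.

Definition Pi_alpha (R : realType) (c d : R) (w : R[i]) : Prop :=
  (~ cldiskD c d w /\ - d / 2 <= complex.Im w) \/ (diskD c d w /\ complex.Im w <= - d / 2).

(* Main.v *)
Require Import Defs.
From HB Require Import structures.
From mathcomp Require Import all_boot all_order all_algebra.
From mathcomp Require Import complex.
From mathcomp Require Import all_classical all_reals.
From mathcomp Require Import ereal topology normedtype sequences landau.
From mathcomp Require Import ring lra.
Import Order.TTheory GRing.Theory Num.Theory.
Import numFieldNormedType.Exports.
Local Open Scope classical_set_scope.
Local Open Scope ring_scope.

Definition den {R : realType} (c d x y : R) := d * (x ^+ 2 + y ^+ 2) + 2 * c * y.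
Definition N1 {R : realType} (c d x y : R) :=
  (- x ^+ 2 + y ^+ 2 + d * y + c) ^+ 2 + x ^+ 2 * (2 * y + d) ^+ 2.
Definition X2 {R : realType} (c d M : R) := 1 + 2 * (M ^+ 2 + d * M + c) + d * M ^+ 2 + 2 * c * M.
Definition Mi {R : realType} (c d K : R) := 1 + 2 * d + 2 * c / d + 16 * K * (d + 2 * c) + K * d.

Lemma N1_ge0 {R : realType} (c d x y : R) : 0 <= N1 c d x y.
Proof. rewrite /N1; apply: addr_ge0; [apply: sqr_ge0|apply: mulr_ge0; apply: sqr_ge0]. Qed.

Lemma abs_rel {R : realType} (c d K x y b : R) : `|b| <= K ->
  b * den c d x y = - 2 * y * N1 c d x y -> 2 * `|y| * N1 c d x y <= K * `|den c d x y|.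
Proof.
move=> hb E.
have B : `|b * den c d x y| <= K * `|den c d x y|.
  by rewrite normrM; apply: ler_wpM2r => //.
have B1 : b * den c d x y <= `|b * den c d x y| by apply: ler_norm.
have B2 : - (b * den c d x y) <= `|b * den c d x y| by rewrite -normrN; apply: ler_norm.
have N0 := N1_ge0 c d x y.
have [y0|y0] := leP 0 y.
  rewrite ger0_norm //; nra.
rewrite ltr0_norm //; nra.
Qed.

Lemma small_y {R : realType} (c d K M x y b : R) : 0 <= c -> 0 < d -> 0 <= K -> 0 <= M ->
  `|y| <= M -> X2 c d M <= x ^+ 2 -> `|b| <= K ->
  b * den c d x y = - 2 * y * N1 c d x y -> `|y| * x ^+ 2 <= 2 * K * (d + 1).
Proof.
move=> c0 d0 K0 M0 hy hx hb E.
have := @abs_rel _ c d K x y b hb E; rewrite /X2 in hx.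
set t := `|y| in hy *.
have t2 : t ^+ 2 = y ^+ 2 by rewrite /t real_normK ?num_real.
have ty : - t <= y <= t by rewrite -ler_norml.
move/andP: ty => [ty1 ty2].
have t0 : 0 <= t by lra.
have dM : 0 <= d * M ^+ 2 by apply: mulr_ge0; [lra|apply: sqr_ge0].
have cM : 0 <= c * M by apply: mulr_ge0.
have hS : `|- x ^+ 2 + y ^+ 2 + d * y + c| >= x ^+ 2 / 2.
  rewrite -normrN; apply: le_trans (ler_norm _).
  have : y ^+ 2 <= M ^+ 2 by rewrite -t2; nra.
  have : d * y <= d * M by nra.
  lra.
have hN : (x ^+ 2 / 2) ^+ 2 <= N1 c d x y.
  rewrite /N1.
  have : (x ^+ 2 / 2) ^+ 2 <= (- x ^+ 2 + y ^+ 2 + d * y + c) ^+ 2.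
    rewrite -[X in _ <= X]real_normK ?num_real //.
    have : 0 <= x ^+ 2 / 2 by apply: divr_ge0; [apply: sqr_ge0|lra].
    move: hS; set u := `|_|; set v := x ^+ 2 / 2; nra.
  have : 0 <= x ^+ 2 * (2 * y + d) ^+ 2 by apply: mulr_ge0; apply: sqr_ge0.
  lra.
have hden : `|den c d x y| <= (d + 1) * x ^+ 2.
  rewrite ler_norml /den.
  have : y ^+ 2 <= M ^+ 2 by rewrite -t2; nra.
  have : c * y <= c * M by nra.
  have : - (c * M) <= c * y by nra.
  nra.
move=> h.
have x2 : 1 <= x ^+ 2 by nra.
have h2 : 2 * t * ((x ^+ 2 / 2) ^+ 2) <= K * ((d + 1) * x ^+ 2).
  have a1 : 2 * t * ((x ^+ 2 / 2) ^+ 2) <= 2 * t * N1 c d x y.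
    by apply: ler_wpM2l => //; lra.
  have a2 : K * `|den c d x y| <= K * ((d + 1) * x ^+ 2) by apply: ler_wpM2l.
  lra.
nra.
Qed.
Lemma root_rel (R : realType) (c d a b x y : R) :
  pquart c d a b (Complex x y) = 0 -> b * x * den c d x y = - 2 * x * y * N1 c d x y.
Proof.
rewrite /pquart => /eqP; rewrite eq_complex /= => /andP[/eqP E1 /eqP E2].
have F1 := congr1 (fun t => t * (x * (d + 2 * y))) E1.
have F2 := congr1 (fun t => t * (c + d * y - x ^+ 2 + y ^+ 2)) E2.
rewrite /= mul0r in F1 F2.
rewrite /den /N1. nra.
Qed.
Lemma big_y_contra {R : realType} (c d K x y b : R) : 0 <= c -> 0 < d -> 0 <= K ->
  Mi c d K < `|y| -> `|b| <= K -> b * den c d x y = - 2 * y * N1 c d x y -> False.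
Proof.
move=> c0 d0 K0; rewrite /Mi => ht hb E.
set t := `|y| in ht.
have t2 : t ^+ 2 = y ^+ 2 by rewrite /t real_normK ?num_real.
have ty : - t <= y <= t by rewrite -ler_norml.
move/andP: ty => [ty1 ty2].
have cd : 0 <= 2 * c / d by apply: divr_ge0; [nra|lra].
have k1 : 0 <= 16 * K * (d + 2 * c) by apply: mulr_ge0; nra.
have k2 : 0 <= K * d by nra.
have t1 : 1 <= t by lra.
have td : 2 * d <= t by lra.
have tc : 2 * c < d * t.
  have : 2 * c / d < t by lra.
  rewrite ltr_pdivrMr // => h; nra.
have tK1 : K * d < t by lra.
have tK2 : 16 * K * (d + 2 * c) < t by lra.
have dpos : 0 < den c d x y.
  rewrite /den; nra.
have s1 : y ^+ 2 <= 2 * (y ^+ 2 + d * y + c) by nra.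
have s2 : y ^+ 2 <= (2 * y + d) ^+ 2 by nra.
have hN : y ^+ 2 * y ^+ 2 <= 16 * N1 c d x y.
  rewrite /N1.
  have [hx|hx] := leP (2 * x ^+ 2) (y ^+ 2 + d * y + c).
    have h4 : y ^+ 2 <= 4 * (- x ^+ 2 + y ^+ 2 + d * y + c) by nra.
    have h5 : 0 <= y ^+ 2 by apply: sqr_ge0.
    have h6 : y ^+ 2 * y ^+ 2 <= 16 * (- x ^+ 2 + y ^+ 2 + d * y + c) ^+ 2 by nra.
    have h7 : 0 <= x ^+ 2 * (2 * y + d) ^+ 2 by apply: mulr_ge0; apply: sqr_ge0.
    lra.
  have h8 : y ^+ 2 <= 4 * x ^+ 2 by nra.
  have h9 : y ^+ 2 * y ^+ 2 <= 4 * x ^+ 2 * (2 * y + d) ^+ 2 by apply: ler_pM; nra.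
  have h7 : 0 <= (- x ^+ 2 + y ^+ 2 + d * y + c) ^+ 2 by apply: sqr_ge0.
  nra.
have hN2 : x ^+ 2 * y ^+ 2 <= N1 c d x y.
  rewrite /N1.
  have h1 : x ^+ 2 * y ^+ 2 <= x ^+ 2 * (2 * y + d) ^+ 2 by apply: ler_wpM2l => //; apply: sqr_ge0.
  have h2 : 0 <= (- x ^+ 2 + y ^+ 2 + d * y + c) ^+ 2 by apply: sqr_ge0.
  lra.
have E2 : 2 * t * N1 c d x y <= K * den c d x y.
  have N0 : 0 <= N1 c d x y.
    rewrite /N1; apply: addr_ge0; [apply: sqr_ge0|apply: mulr_ge0; apply: sqr_ge0].
  move: hb; rewrite ler_norml => /andP[hb1 hb2].
  have hd1 : b * den c d x y <= K * den c d x y by apply: ler_wpM2r => //; apply: ltW.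
  have hd2 : - K * den c d x y <= b * den c d x y by apply: ler_wpM2r => //; apply: ltW.
  have [y0|y0] := leP 0 y.
    have -> : t = y by rewrite /t ger0_norm.
    nra.
  have -> : t = - y by rewrite /t ltr0_norm.
  nra.
have t3 : t <= t ^+ 3 by nra.
rewrite /den in E2 dpos.
have Kc : 0 <= K * c by apply: mulr_ge0.
have e1 : K * (d * (x ^+ 2 + y ^+ 2) + 2 * c * y) <= K * d * x ^+ 2 + K * (d + 2 * c) * t ^+ 2.
  have yt : y <= t ^+ 2 by nra.
  have : K * c * y <= K * c * t ^+ 2 by apply: ler_wpM2l.
  rewrite t2; nra.
have t0 : 0 <= t by lra.
have e2 : t * (x ^+ 2 * y ^+ 2) <= t * N1 c d x y by nra.
have e3 : t * (y ^+ 2 * y ^+ 2) <= 16 * (t * N1 c d x y).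
  nra.
have x2 : 0 <= x ^+ 2 by apply: sqr_ge0.
have e4 : K * d * x ^+ 2 <= t * (x ^+ 2 * y ^+ 2).
  have : K * d <= t ^+ 3 by lra.
  rewrite -t2; nra.
have e5 : 16 * K * (d + 2 * c) * t ^+ 2 < t * (y ^+ 2 * y ^+ 2).
  have : 16 * K * (d + 2 * c) < t ^+ 3 by lra.
  have : 0 < t ^+ 2 by nra.
  rewrite -t2; nra.
nra.
Qed.

Lemma sqrt_le_iff {R : realType} (u v : R) : 0 <= u -> 0 <= v ->
  [/\ (Num.sqrt u <= v <-> u <= v ^+ 2), (Num.sqrt u < v <-> u < v ^+ 2) &
      (Num.sqrt u = v <-> u = v ^+ 2)].
Proof.
move=> u0 v0; have s0 := sqrtr_ge0 u; have su := sqr_sqrtr u0.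
set s := Num.sqrt u in s0 su *.
split; split=> h.
- nra.
- nra.
- nra.
- nra.
- by rewrite -h su.
- apply/le_anti/andP; split; nra.
Qed.

Lemma disk_iffs {R : realType} (c d x y : R) : 0 <= c -> 0 < d ->
  [/\ cldiskD c d (Complex x y) <-> den c d x y <= 0,
      diskD c d (Complex x y) <-> den c d x y < 0 &
      bdD c d (Complex x y) <-> den c d x y = 0].
Proof.
move=> c0 d0.
rewrite /cldiskD /diskD /bdD /cmod /=.
have v0 : 0 <= c / d by apply: divr_ge0 => //; lra.
have u0 : 0 <= (x + 0) ^+ 2 + (y + c / d) ^+ 2 by apply: addr_ge0; apply: sqr_ge0.
have [h1 h2 h3] := @sqrt_le_iff _ _ _ u0 v0.
have E : den c d x y = d * ((x + 0) ^+ 2 + (y + c / d) ^+ 2 - (c / d) ^+ 2).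
  rewrite /den; field; lra.
rewrite E; split.
- rewrite h1; split => h; nra.
- rewrite h2; split => h; nra.
- rewrite h3; split => h.
    by rewrite h; ring.
  have : (x + 0) ^+ 2 + (y + c / d) ^+ 2 - (c / d) ^+ 2 = 0.
    by move/eqP: h; rewrite mulf_eq0 => /orP[/eqP|/eqP] //; lra.
  lra.
Qed.

Lemma div_ge0_iff {R : realType} (a b : R) : b != 0 -> (0 <= a / b <-> 0 <= a * b).
Proof.
move=> b0.
have E : a * b = (a / b) * (b ^+ 2) by rewrite expr2 mulrA divfK.
have b2 : 0 < b ^+ 2 by rewrite exprn_even_gt0.
rewrite E; split => h.
  by apply: mulr_ge0 => //; apply: ltW.
move: h; set q := a / b; nra.
Qed.

Lemma N1_gt0 {R : realType} (c d x y : R) : 0 <= c -> 0 < d -> x != 0 ->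
  den c d x y != 0 -> 0 < N1 c d x y.
Proof.
move=> c0 d0 x0 hd.
rewrite lt_def N1_ge0 andbT; apply/eqP => h.
move: hd; rewrite /den; apply/negP; rewrite negbK; apply/eqP.
have x2 : 0 < x ^+ 2 by rewrite exprn_even_gt0.
have a0 : 0 <= (- x ^+ 2 + y ^+ 2 + d * y + c) ^+ 2 by apply: sqr_ge0.
have b0 : 0 <= (2 * y + d) ^+ 2 by apply: sqr_ge0.
move: h; rewrite /N1 => h.
have hb : (2 * y + d) ^+ 2 = 0 by nra.
have ha : (- x ^+ 2 + y ^+ 2 + d * y + c) ^+ 2 = 0 by nra.
move/eqP: hb; rewrite sqrf_eq0 => /eqP hb.
move/eqP: ha; rewrite sqrf_eq0 => /eqP ha.
have -> : y = - d / 2 by lra.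
have -> : x ^+ 2 = y ^+ 2 + d * y + c by lra.
have -> : y = - d / 2 by lra.
by field.
Qed.

Lemma part3 {R : realType} (c d : R) : 0 <= c -> 0 < d -> forall w : R[i], complex.Re w != 0 -> ~ bdD c d w ->
         (0 <= betahat c d w <-> Pi_beta c d w).
Proof.
move=> c0 d0 [x y] /= x0.
have [h1 h2 h3] := @disk_iffs _ c d x y c0 d0.
rewrite h3 /Pi_beta h1 /= => hd.
have hd' : den c d x y != 0 by apply/eqP.
have N0 := @N1_gt0 _ c d x y c0 d0 x0 hd'.
have -> : betahat c d (Complex x y) = (- 2 * y * N1 c d x y) / den c d x y by [].
rewrite div_ge0_iff //.
have x2 : 0 < x ^+ 2 by rewrite exprn_even_gt0.
have dd : den c d x y < 0 -> y < 0.
  rewrite /den => h; have : 0 <= d * (x ^+ 2 + y ^+ 2) by apply: mulr_ge0; nra.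
  nra.
rewrite (_ : - 2 * y * N1 c d x y * den c d x y = - 2 * N1 c d x y * (y * den c d x y)); last by ring.
split.
- move=> h.
  have hyd : y * den c d x y <= 0 by move: h; set z := y * den c d x y; nra.
  have [dn|dp] := ltP (den c d x y) 0.
    have := dd dn; nra.
  split; first lra.
  have : 0 < den c d x y by rewrite lt_def hd' dp.
  nra.
- move=> [h h']. have : 0 < den c d x y by lra.
  move=> hp; have : y * den c d x y <= 0 by nra.
  set z := y * den c d x y; nra.
Qed.

Lemma part4 {R : realType} (c d : R) : 0 <= c -> 0 < d -> forall w : R[i], complex.Re w != 0 -> ~ bdD c d w ->
         (0 <= alphahat c d w <-> Pi_alpha c d w).
Proof.
move=> c0 d0 [x y] /= x0.
have [h1 h2 h3] := @disk_iffs _ c d x y c0 d0.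
rewrite h3 /Pi_alpha h1 h2 /= => hd.
have hd' : den c d x y != 0 by apply/eqP.
have x2 : 0 < x ^+ 2 by rewrite exprn_even_gt0.
have P0 : 0 < (x ^+ 2 + y ^+ 2) ^+ 2.
  rewrite exprn_even_gt0 //; have : 0 <= y ^+ 2 by apply: sqr_ge0.
  move=> ?; apply/eqP => h; lra.
have -> : alphahat c d (Complex x y) = ((2 * y + d) * (x ^+ 2 + y ^+ 2) ^+ 2) / den c d x y by [].
rewrite div_ge0_iff //.
move: P0; set P := (_ ^+ 2) => P0.
rewrite (_ : (2 * y + d) * P * den c d x y = P * ((2 * y + d) * den c d x y)); last by ring.
split.
- move=> h.
  have hyd : 0 <= (2 * y + d) * den c d x y by move: h; set z := (2 * y + d) * den c d x y; nra.
  have [dn|dp] := ltP (den c d x y) 0.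
    right; split => //; nra.
  left; split; first lra.
  have : 0 < den c d x y by rewrite lt_def hd' dp.
  nra.
- move=> [[h h']|[h h']].
    have : 0 < den c d x y by lra.
    move=> hp; have : 0 <= (2 * y + d) * den c d x y by nra.
    set z := (2 * y + d) * den c d x y; nra.
  have : 0 <= (2 * y + d) * den c d x y by nra.
  set z := (2 * y + d) * den c d x y; nra.
Qed.

Lemma numrange_bound {R : realType} (H : lmodType R[i]) (ip : H -> H -> R[i]) (B : H -> H) :
  is_inner_product ip -> bounded_selfadjoint ip B ->
  exists K : R, 0 <= K /\ forall r, numrange ip setT B r -> `|r| <= K.
Proof.
move=> [lin csym pos def] [Blin [M HM] Bsa].
exists `|M|; split => // r [x [_ hx hr]].
have hnx : hnorm ip x = 1 by rewrite /hnorm hx /= sqrtr1.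
have hu := HM x; rewrite hnx mulr1 in hu.
set u := B x in hu hr.
have hn0 : 0 <= hnorm ip u by apply: sqrtr_ge0.
have Ru : complex.Re (ip u u) = hnorm ip u ^+ 2 by rewrite /hnorm sqr_sqrtr.
set z := (- r)%:C%C *: x + u.
have e1 : ip z x = 0 by rewrite /z lin hx hr; apply/eqP; rewrite eq_complex /=; apply/andP; split; apply/eqP; ring.
have e2 : ip x z = 0 by rewrite csym e1; apply/eqP; rewrite eq_complex /=; apply/andP; split; apply/eqP; ring.
have e3 : ip x u = (r%:C)%C by rewrite csym hr; apply/eqP; rewrite eq_complex /=; apply/andP; split; apply/eqP; ring.
have e4 : ip z z = conjc (ip z u) by rewrite {1}/z lin e2 mulr0 add0r csym.
have := pos z; rewrite e4 /z lin e3.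
case: (ip u u) Ru => [pr pi] /= Ru.
have hM : hnorm ip u ^+ 2 <= M ^+ 2.
  have : hnorm ip u * hnorm ip u <= M * M by nra.
  by rewrite !expr2.
rewrite -(real_normK (num_real M)) in hM.
move=> h.
have : r ^+ 2 <= `|M| ^+ 2 by nra.
have a0 : 0 <= `|M| by [].
rewrite -(real_normK (num_real r)) => h2.
have : 0 <= `|r| by [].
nra.
Qed.

Lemma closure_bound {R : realType} (S : set R) (K : R) :
  (forall r, S r -> `|r| <= K) -> forall b, closure S b -> `|b| <= K + 1.
Proof.
move=> hS b hb.
have := hb _ (nbhsx_ballx b 1 ltr01).
move=> [r [Sr]]; rewrite -ball_normE /ball_ /= => hbr.
have := hS r Sr.
have : `|b| <= `|b - r| + `|r|.
  by rewrite -[X in `|X| <= _](subrK r); apply: ler_normD.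
lra.
Qed.

Lemma W_approx {R : realType} (c d K : R) (WA WB : set R) (w : R[i]) :
  (forall b, closure WB b -> `|b| <= K) ->
  WOmega c d WA WB w -> forall e : R, 0 < e ->
  exists (a' b' : R) (w' : R[i]),
    [/\ pquart c d a' b' w' = 0, `|b'| <= K + 1 & cmod (w' - w) < e].
Proof.
move=> hK [a [b [_ hb hroot]]] e e0.
have hbK := hK b hb.
case: a hroot => [a0| |] /= hroot.
- exists a0, b, w; split => //; first lra.
  by rewrite subrr /cmod /= expr0n /= addr0 sqrtr0.
- move: hroot => [ak [bk [wk [_ hbk hwk hrt]]]].
  have [N hN] := hwk e e0.
  move/cvgrPdist_lt: hbk => /(_ 1 ltr01) [N' _ hN'].
  pose k := maxn N N'.
  exists (ak k), (bk k), (wk k); split => //.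
    have := hN' k (leq_maxr N N'); rewrite /= => h.
    have : `|bk k| <= `|b - bk k| + `|b|.
      by rewrite distrC -{1}(subrK b (bk k)); apply: ler_normD.
    lra.
  exact: hN k (leq_maxl N N').
- move: hroot => [ak [bk [wk [_ hbk hwk hrt]]]].
  have [N hN] := hwk e e0.
  move/cvgrPdist_lt: hbk => /(_ 1 ltr01) [N' _ hN'].
  pose k := maxn N N'.
  exists (ak k), (bk k), (wk k); split => //.
    have := hN' k (leq_maxr N N'); rewrite /= => h.
    have : `|bk k| <= `|b - bk k| + `|b|.
      by rewrite distrC -{1}(subrK b (bk k)); apply: ler_normD.
    lra.
  exact: hN k (leq_maxl N N').
Qed.

Definition P1 {R : realType} (c d M : R) := d * M ^+ 2 + 2 * d ^+ 2 * M + 2 * d * c + d ^+ 3 + 2 * c * M.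
Definition P2 {R : realType} (c d M : R) := (M ^+ 2 + d * M + c) ^+ 2.

Lemma asym_pt {R : realType} (c d M eps x y : R) : 0 <= c -> 0 < d -> 0 <= M -> 0 < eps ->
  `|y| <= M -> 1 <= x ^+ 2 -> 4 * c * M <= d * x ^+ 2 ->
  2 * (P1 c d M + d * P2 c d M) <= eps * d * x ^+ 2 ->
  `|(- 2 * y * N1 c d x y) / den c d x y - (- 2 * y * x ^+ 2 / d)| <= eps * `|- 2 * y * x ^+ 2 / d|.
Proof.
move=> c0 d0 M0 e0 hy x1 hc he.
have ty : - M <= y <= M by rewrite -ler_norml.
move/andP: ty => [ty1 ty2].
have y2 : y ^+ 2 <= M ^+ 2 by nra.
have cy : - (c * M) <= c * y by nra.
have dy2 : 0 <= d * y ^+ 2 by apply: mulr_ge0; [lra|apply: sqr_ge0].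
have dpos : d * x ^+ 2 / 2 <= den c d x y by rewrite /den; nra.
have den0 : 0 < den c d x y by nra.
have xd0 : 0 < x ^+ 2 * den c d x y by apply: mulr_gt0 => //; lra.
set D := d * N1 c d x y - x ^+ 2 * den c d x y.
have Ef : (- 2 * y * N1 c d x y) / den c d x y - (- 2 * y * x ^+ 2 / d)
    = (- 2 * y * x ^+ 2 / d) * (D / (x ^+ 2 * den c d x y)).
  rewrite /D; field; rewrite (gt_eqF den0) (gt_eqF d0) andbT /=; apply/eqP => x0; move: x1; rewrite x0; lra.
rewrite Ef normrM mulrC; apply: ler_wpM2r => //.
rewrite normrM normfV (gtr0_norm xd0) ler_pdivrMr //.
have ED : D = x ^+ 2 * (d * y ^+ 2 + 2 * d ^+ 2 * y - 2 * d * c + d ^+ 3 - 2 * c * y)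
   + d * (y ^+ 2 + d * y + c) ^+ 2 by rewrite /D /N1 /den; ring.
have hQ1 : `|d * y ^+ 2 + 2 * d ^+ 2 * y - 2 * d * c + d ^+ 3 - 2 * c * y| <= P1 c d M.
  rewrite /P1 ler_norml.
  have dd2 : 0 <= d ^+ 2 by apply: sqr_ge0.
  have : - (d ^+ 2 * M) <= d ^+ 2 * y by nra.
  have : d ^+ 2 * y <= d ^+ 2 * M by nra.
  have : d * y ^+ 2 <= d * M ^+ 2 by nra.
  have : 0 <= d ^+ 3 by apply: exprn_ge0; lra.
  have : 0 <= d * c by nra.
  have : c * y <= c * M by nra.
  move=> *; apply/andP; split; nra.
have hQ2 : (y ^+ 2 + d * y + c) ^+ 2 <= P2 c d M.
  rewrite /P2.
  have h0 : `|y ^+ 2 + d * y + c| <= M ^+ 2 + d * M + c.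
    rewrite ler_norml; apply/andP; split; nra.
  have h1 : 0 <= `|y ^+ 2 + d * y + c| by [].
  rewrite -real_normK ?num_real //; nra.
have hP1 : 0 <= P1 c d M by apply: le_trans hQ1.
have hP2 : 0 <= P2 c d M by apply: le_trans hQ2; apply: sqr_ge0.
have hD : `|D| <= x ^+ 2 * (P1 c d M + d * P2 c d M).
  rewrite ED; apply: le_trans (ler_normD _ _) _.
  rewrite [`|x ^+ 2 * _|]normrM [`|d * _|]normrM (ger0_norm (sqr_ge0 x)) (gtr0_norm d0) (ger0_norm (sqr_ge0 (y ^+ 2 + d * y + c))).
  have : x ^+ 2 * `|d * y ^+ 2 + 2 * d ^+ 2 * y - 2 * d * c + d ^+ 3 - 2 * c * y| <= x ^+ 2 * P1 c d M.
    by apply: ler_wpM2l => //; apply: sqr_ge0.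
  have : d * (y ^+ 2 + d * y + c) ^+ 2 <= d * P2 c d M by apply: ler_wpM2l => //; lra.
  have : d * P2 c d M <= x ^+ 2 * (d * P2 c d M).
    have : 0 <= d * P2 c d M by apply: mulr_ge0 => //; lra.
    nra.
  nra.
apply: le_trans hD _.
have : (P1 c d M + d * P2 c d M) <= eps * (d * x ^+ 2 / 2) by lra.
move=> h.
have : eps * (d * x ^+ 2 / 2) <= eps * den c d x y by apply: ler_wpM2l => //; lra.
move=> h2.
have : x ^+ 2 * (P1 c d M + d * P2 c d M) <= x ^+ 2 * (eps * den c d x y).
  by apply: ler_wpM2l; [apply: sqr_ge0|lra].
move=> h3; apply: le_trans h3 _.
rewrite mulrA [x ^+ 2 * eps]mulrC -mulrA; lra.
Qed.

Lemma cmod_ge {R : realType} (z : R[i]) : `|complex.Re z| <= cmod z /\ `|complex.Im z| <= cmod z.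
Proof.
rewrite /cmod; case: z => p q /=.
have q2 := sqr_ge0 q; have p2 := sqr_ge0 p.
split; rewrite -sqrtr_sqr ler_sqrt; try lra; by apply: addr_ge0.
Qed.

Lemma tri {R : realType} (a b : R) : `|a| <= `|b| + `|b - a|.
Proof.
have -> : `|a| = `|b - (b - a)| by congr (`|_|); ring.
exact: ler_normB.
Qed.

Lemma cancel_x {R : realType} (c d b x y : R) : x != 0 ->
  b * x * den c d x y = - 2 * x * y * N1 c d x y -> b * den c d x y = - 2 * y * N1 c d x y.
Proof.
move=> x0 E; apply/eqP; rewrite -subr_eq0.
have : x * (b * den c d x y - (- 2 * y * N1 c d x y)) = 0.
  rewrite (_ : x * _ = b * x * den c d x y - (- 2 * x * y * N1 c d x y)).
    by rewrite E subrr.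
  ring.
by move/eqP; rewrite mulf_eq0 (negbTE x0).
Qed.

Lemma Mi_ge0 {R : realType} (c d K : R) : 0 <= c -> 0 < d -> 0 <= K -> 0 <= Mi c d K.
Proof.
move=> c0 d0 K0; rewrite /Mi.
have : 0 <= 2 * c / d by apply: divr_ge0; lra.
have : 0 <= K * (d + 2 * c) by apply: mulr_ge0; lra.
have : 0 <= K * d by apply: mulr_ge0; lra.
nra.
Qed.

Lemma W_ybound {R : realType} (c d K : R) (WA WB : set R) (w : R[i]) :
  0 <= c -> 0 < d -> 0 <= K ->
  (forall b, closure WB b -> `|b| <= K) ->
  WOmega c d WA WB w -> complex.Re w != 0 -> `|complex.Im w| <= Mi c d (K + 1) + 1.
Proof.
move=> c0 d0 K0 hK hW; case: w hW => x y hW /= x0.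
rewrite leNgt; apply/negP => hy.
have xp : 0 < `|x| by rewrite normr_gt0.
set e := Num.min 1 (`|x| / 2).
have e0 : 0 < e by rewrite lt_min ltr01 /=; lra.
have [e1 e2] : e <= 1 /\ e <= `|x| / 2.
  by move: (le_refl e); rewrite {2}/e le_min => /andP[].
have [a' [b' [[x' y'] [hr hb' hc]]]] := @W_approx _ c d K WA WB _ hK hW e e0.
have [c1 c2] := cmod_ge (Complex x' y' - Complex x y).
rewrite /= in c1 c2.
have hx1 : `|x' - x| < e by lra.
have hy1 : `|y' - y| < e by lra.
have tx := tri x x'.
have x'0 : x' != 0.
  apply/negP => /eqP hx'; move: tx hx1; rewrite hx' normr0; lra.
have ty := tri y y'.
have E := @cancel_x _ _ _ _ _ _ x'0 (@root_rel _ _ _ _ _ _ _ hr).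
apply: (@big_y_contra _ c d (K + 1) x' y' b') => //; first lra.
lra.
Qed.

Lemma X2_ge1 {R : realType} (c d M : R) : 0 <= c -> 0 < d -> 0 <= M -> 1 <= X2 c d M.
Proof.
move=> c0 d0 M0; rewrite /X2.
have : 0 <= d * M by apply: mulr_ge0; lra.
have : 0 <= d * M ^+ 2 by apply: mulr_ge0; [lra|apply: sqr_ge0].
have : 0 <= c * M by apply: mulr_ge0.
have := sqr_ge0 M.
nra.
Qed.

Lemma W_ysmall {R : realType} (c d K : R) (WA WB : set R) (w : R[i]) :
  0 <= c -> 0 < d -> 0 <= K ->
  (forall b, closure WB b -> `|b| <= K) ->
  WOmega c d WA WB w -> 4 * X2 c d (Mi c d (K + 1)) <= complex.Re w ^+ 2 ->
  `|complex.Im w| * complex.Re w ^+ 2 <= 8 * (K + 1) * (d + 1) + 1.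
Proof.
move=> c0 d0 K0 hK hW; case: w hW => x y hW /= hx.
set M := Mi c d (K + 1) in hx.
have M0 : 0 <= M by apply: Mi_ge0 => //; lra.
have X1 := @X2_ge1 _ c d M c0 d0 M0.
have x4 : 4 <= x ^+ 2 by lra.
have xx : `|x| ^+ 2 = x ^+ 2 by rewrite real_normK ?num_real.
have ax : 2 <= `|x|.
  have : 0 <= `|x| by [].
  nra.
set e := 1 / x ^+ 2.
have xp : 0 < x ^+ 2 by lra.
have e0 : 0 < e by rewrite /e divr_gt0.
have ex : e * x ^+ 2 = 1 by rewrite /e mulrC mulrA mulr1 mulfV //; lra.
have e1 : e <= 1 / 4.
  rewrite /e ler_pdivrMr // mul1r.
  have : 4 * (1 / 4) = (1 : R) by field.
  nra.
have [a' [b' [[x' y'] [hr hb' hc]]]] := @W_approx _ c d K WA WB _ hK hW e e0.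
have [c1 c2] := cmod_ge (Complex x' y' - Complex x y).
rewrite /= in c1 c2.
have hx1 : `|x' - x| < e by lra.
have hy1 : `|y' - y| < e by lra.
have tx := tri x x'.
have ax' : `|x| / 2 <= `|x'| by lra.
have xx' : `|x'| ^+ 2 = x' ^+ 2 by rewrite real_normK ?num_real.
have x4' : x ^+ 2 <= 4 * x' ^+ 2.
  rewrite -xx -xx'; have : 0 <= `|x| by []. nra.
have x'0 : x' != 0.
  apply/negP => /eqP hx'; move: ax'; rewrite hx' normr0; lra.
have ty := tri y y'.
have E := @cancel_x _ _ _ _ _ _ x'0 (@root_rel _ _ _ _ _ _ _ hr).
have hy' : `|y'| <= M.
  rewrite leNgt; apply/negP => hy'.
  by apply: (@big_y_contra _ c d (K + 1) x' y' b') => //; lra.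
have := @small_y _ c d (K + 1) M x' y' b' c0 d0 ltac:(lra) M0 hy' ltac:(lra) hb' E.
move=> hs.
have : `|y| * x ^+ 2 <= `|y'| * x ^+ 2 + e * x ^+ 2.
  have : 0 <= `|y| by []. nra.
rewrite ex => h1.
have : `|y'| * x ^+ 2 <= 4 * (`|y'| * x' ^+ 2).
  have : 0 <= `|y'| by []. nra.
lra.
Qed.

Theorem corollary2p7 (R : realType) (H : lmodType R[i]) (ip : H -> H -> R[i])
  (DA : set H) (A B : H -> H) (c d : R) :
  is_hilbert ip ->
  unbounded_selfadjoint ip DA A ->
  bounded_selfadjoint ip B ->
  (exists x : H, B x <> 0) ->
  0 <= c -> 0 < d ->
  let W := WOmega c d (numrange ip DA A) (numrange ip setT B) in
  [/\ (* (i) *)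
      (exists M : R, forall w : R[i], complex.Re w != 0 -> M < `|complex.Im w| -> ~ W w),
      (* (ii) *)
      (forall wn : nat -> R[i], (forall n, W (wn n)) ->
         (fun n => `|complex.Re (wn n)|) @ \oo --> +oo ->
         (fun n => betahat c d (wn n))
            ~_\oo (fun n => - 2 * complex.Im (wn n) * complex.Re (wn n) ^+ 2 / d)
         /\ (fun n => complex.Im (wn n)) =O_\oo (fun n => complex.Re (wn n) ^- 2)),
      (* (iii) *)
      (forall w : R[i], complex.Re w != 0 -> ~ bdD c d w ->
         (0 <= betahat c d w <-> Pi_beta c d w)) &
      (* (iv) *)
      (forall w : R[i], complex.Re w != 0 -> ~ bdD c d w ->
         (0 <= alphahat c d w <-> Pi_alpha c d w))].
Proof.
move=> [hip _] _ hB _ c0 d0 W.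
have [KB [KB0 hKB]] := @numrange_bound _ _ ip B hip hB.
set K := KB + 1.
have hK : forall b, closure (numrange ip setT B) b -> `|b| <= K := @closure_bound _ _ KB hKB.
have K0 : 0 <= K by rewrite /K; lra.
set Mb := Mi c d (K + 1) + 1.
have Mb0 : 0 <= Mb by have := @Mi_ge0 _ c d (K + 1) c0 d0 ltac:(lra); rewrite /Mb; lra.
have hyb : forall w, W w -> complex.Re w != 0 -> `|complex.Im w| <= Mb.
  by move=> w hw x0; exact: (@W_ybound _ c d K _ _ w c0 d0 K0 hK hw x0).
split.
- exists Mb => w x0 hy hw.
  by have := hyb w hw x0; lra.
- move=> wn hW /cvgryPgt hx.
  set X0 := 4 * X2 c d (Mi c d (K + 1)).
  have X01 : 1 <= X0.
    have := @X2_ge1 _ c d (Mi c d (K + 1)) c0 d0 (@Mi_ge0 _ c d (K + 1) c0 d0 ltac:(lra)).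
    rewrite /X0; lra.
  have sq : forall x : R, 1 <= `|x| -> `|x| <= x ^+ 2.
    move=> x hx1; rewrite -(real_normK (num_real x)); nra.
  split.
  + apply/eqaddoP => eps eps0.
    set q1 := 4 * c * Mb / d.
    set q2 := 2 * (P1 c d Mb + d * P2 c d Mb) / (eps * d).
    have hq1 : d * q1 = 4 * c * Mb by rewrite /q1 mulrC divfK //; apply/eqP; lra.
    have q10 : 0 <= q1 by rewrite /q1; apply: divr_ge0; [apply: mulr_ge0; lra|lra].
    have P10 : 0 <= P1 c d Mb.
      rewrite /P1.
      have := sqr_ge0 Mb; have := sqr_ge0 d.
      have : 0 <= d ^+ 3 by apply: exprn_ge0; lra.
      move=> *; nra.
    have P20 : 0 <= P2 c d Mb by apply: sqr_ge0.
    have ed0 : 0 < eps * d by apply: mulr_gt0.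
    have hq2 : eps * d * q2 = 2 * (P1 c d Mb + d * P2 c d Mb).
      by rewrite /q2 mulrC divfK //; apply/eqP; lra.
    have q20 : 0 <= q2.
      rewrite /q2; apply: divr_ge0; [nra|lra].
    near=> n.
    have hn : 1 + q1 + q2 < `|complex.Re (wn n)| by near: n; exact: hx.
    have -> : ((fun n0 : nat => betahat c d (wn n0)) -
     (fun n0 : nat => -2 * complex.Im (wn n0) * complex.Re (wn n0) ^+ 2 / d)) n
      = betahat c d (wn n) - (-2 * complex.Im (wn n) * complex.Re (wn n) ^+ 2 / d) by [].
    move: (hW n) hn; case: (wn n) => x y hWn /= hn.
    have x1 : 1 <= `|x| by lra.
    have hxx := sq x x1.
    have x0 : x != 0 by apply/negP => /eqP hx0; move: x1; rewrite hx0 normr0; lra.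
    have hy := hyb _ hWn x0.
    have := @asym_pt _ c d Mb eps x y c0 d0 Mb0 eps0 hy ltac:(lra) ltac:(nra) ltac:(nra).
    by [].
  + apply/eqO_exP; exists (8 * (K + 1) * (d + 1) + 1).
      have : 0 <= (K + 1) * (d + 1) by apply: mulr_ge0; lra.
      lra.
    near=> n.
    have hn : 1 + X0 < `|complex.Re (wn n)| by near: n; exact: hx.
    move: (hW n) hn; case: (wn n) => x y hWn /= hn.
    have x1 : 1 <= `|x| by lra.
    have hxx := sq x x1.
    have xp : 0 < x ^+ 2 by lra.
    have hX : X0 <= x ^+ 2 by lra.
    have := @W_ysmall _ c d K _ _ (Complex x y) c0 d0 K0 hK hWn hX.
    rewrite /= normfV (ger0_norm (ltW xp)) ler_pdivlMr //.
- exact: (@part3 _ c d c0 d0).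
- exact: (@part4 _ c d c0 d0).
Unshelve. all: by end_near.
Qed.
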